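(* Let $f:\mathbb{R}^n\to\mathbb{R}$ be convex and differentiable with $\nabla f$ $L$-Lipschitz continuous, and assume $X^*$ is non-empty. Then the sequence $\{x^k\}$ generated by Algorithm 3 (run without stopping, with $\nabla f(x^k)\ne0$ for all $k$) converges to a point of $X^*$.
   Context: $X^*=\{x:\nabla f(x)=0\}$ (the set of minimizers of the convex $f$). Algorithm 3: parameters $0<\mu<\nu<1$, $0<\underline{h}<1\le\gamma_0^0\le\overline{h}<\frac4L$, $0\le\beta\le1$, $\theta\in(0,1)$, $\tau>1$, $\eta\in(0,2)$, starting point $x^0$; run while $\nabla f(x^k)\neq0$. At iteration $k$: for $\gamma>0$ let $z^k(\gamma)=x^k-\gamma\nabla f(x^k)$ and $r_k(\gamma)=\gamma\|\nabla f(z^k(\gamma))-\nabla f(x^k)\|/\|z^k(\gamma)-x^k\|$; starting from $\gamma_0^k$, while $r_k(\gamma_l^k)>\nu$ set $\gamma_{l+1}^k=\gamma_l^k\theta\min\{1,1/r_k(\gamma_l^k)\}$; let $h_k$ be the first $\gamma_l^k$ with $r_k(\gamma_l^k)\le\nu$. Then $z^k=x^k-h_k\nabla f(x^k)$ and $x^{k+1}=x^k-\eta\alpha_kh_k\big(\nabla f(x^k)-\beta(\nabla f(x^k)-\nabla f(z^k))\big)$ with $$\alpha_k=\frac{(1-\beta)\left(1-\frac{Lh_k}{4}\right)\|x^k-z^k\|^2+\beta\langle x^k-z^k,h_k\nabla f(z^k)\rangle}{h_k^2\|\nabla f(x^k)-\beta(\nabla f(x^k)-\nabla f(z^k))\|^2};$$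 finally $\gamma_0^{k+1}=\mathbf{P}_{[\underline{h},\overline{h}]}(\tau h_k)$ if $r_k(h_k)\le\mu$, else $\gamma_0^{k+1}=\mathbf{P}_{[\underline{h},\overline{h}]}(h_k)$, where $\mathbf{P}_{[a,b]}$ is projection onto $[a,b]$. *)

(* Defs.v *)
From HB Require Import structures.
From mathcomp Require Import all_boot all_order all_algebra.
From mathcomp Require Import all_classical all_reals all_analysis.
Set Implicit Arguments. Unset Strict Implicit. Unset Printing Implicit Defensive.
Import Order.TTheory GRing.Theory Num.Theory.
Import numFieldNormedType.Exports.
Local Open Scope ring_scope.

Section Defs.
Variables (R : realType) (n : nat).
Local Notation V := 'rV[R]_n.

Definition dotv (u v : V) : R := \sum_(i < n) u 0 i * v 0 i.
Definition enorm (u : V) : R := Num.sqrt (dotv u u).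

Definition grad (f : V -> R) (x : V) : V :=
  \row_(i < n) derive f x (delta_mx 0 i).

Definition convex_fun (f : V -> R) : Prop :=
  forall (x y : V) (t : R), 0 <= t <= 1 ->
    f (t *: x + (1 - t) *: y) <= t * f x + (1 - t) * f y.

Definition lipschitz_with (L : R) (g : V -> V) : Prop :=
  forall x y : V, enorm (g x - g y) <= L * enorm (x - y).

Definition proj_int (a b t : R) : R := Num.min b (Num.max a t).

Definition ratio (f : V -> R) (x : V) (gam : R) : R :=
  let z := x - gam *: grad f x in
  gam * enorm (grad f z - grad f x) / enorm (z - x).

Fixpoint backtrack (f : V -> R) (x : V) (theta g0 : R) (l : nat) : R :=
  match l with
  | 0 => g0
  | l'.+1 => let g := backtrack f x theta g0 l' in
             g * theta * Num.min 1 (1 / ratio f x g)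
  end.

Definition alpha (f : V -> R) (L beta : R) (x : V) (h : R) : R :=
  let z := x - h *: grad f x in
  ((1 - beta) * (1 - L * h / 4) * enorm (x - z) ^+ 2
     + beta * dotv (x - z) (h *: grad f z))
  / (h ^+ 2 * enorm (grad f x - beta *: (grad f x - grad f z)) ^+ 2).

Definition algorithm3 (f : V -> R) (L mu nu hlo hup beta theta tau eta : R)
    (x0 : V) (g00 : R) (x : nat -> V) (h g0 : nat -> R) : Prop :=
  [/\ x 0%N = x0, g0 0%N = g00 &
   forall k : nat,
     [/\ exists l : nat,
           h k = backtrack f (x k) theta (g0 k) l
           /\ ratio f (x k) (h k) <= nu
           /\ (forall l' : nat, (l' < l)%N ->
                 nu < ratio f (x k) (backtrack f (x k) theta (g0 k) l')),
         x k.+1 = x k - (eta * alpha f L beta (x k) (h k) * h k) *: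
                    (grad f (x k) - beta *: (grad f (x k) - grad f (x k - h k *: grad f (x k))))
       & g0 k.+1 = if ratio f (x k) (h k) <= mu
                   then proj_int hlo hup (tau * h k)
                   else proj_int hlo hup (h k)]].

End Defs.

(* Main.v *)
Require Import Defs.
From HB Require Import structures.
From mathcomp Require Import all_boot all_order all_algebra.
From mathcomp Require Import all_classical all_reals all_analysis.
Import Order.TTheory GRing.Theory Num.Theory.
Import numFieldNormedType.Exports.
Local Open Scope ring_scope.
Local Open Scope classical_set_scope.
From mathcomp Require Import ring lra.
Set Implicit Arguments. Unset Strict Implicit. Unset Printing Implicit Defensive.

Local Open Scope classical_set_scope.

Section Dot.
Variables (R : realType) (n : nat).
Local Notation V := 'rV[R]_n.
Implicit Types u v w : V.

Lemma dotvC u v : dotv u v = dotv v u.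
Proof. by apply: eq_bigr => i _; rewrite mulrC. Qed.

Lemma dotvDl u v w : dotv (u + v) w = dotv u w + dotv v w.
Proof. by rewrite /dotv -big_split; apply: eq_bigr => i _; rewrite mxE mulrDl. Qed.

Lemma dotvZl (a : R) u v : dotv (a *: u) v = a * dotv u v.
Proof. by rewrite /dotv mulr_sumr; apply: eq_bigr => i _; rewrite mxE mulrA. Qed.

Lemma dotvNl u v : dotv (- u) v = - dotv u v.
Proof. by rewrite -scaleN1r dotvZl mulN1r. Qed.

Lemma dotvBl u v w : dotv (u - v) w = dotv u w - dotv v w.
Proof. by rewrite dotvDl dotvNl. Qed.

Lemma dotvDr u v w : dotv w (u + v) = dotv w u + dotv w v.
Proof. by rewrite dotvC dotvDl !(dotvC w). Qed.

Lemma dotvZr (a : R) u v : dotv v (a *: u) = a * dotv v u.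
Proof. by rewrite dotvC dotvZl dotvC. Qed.

Lemma dotvNr u v : dotv v (- u) = - dotv v u.
Proof. by rewrite dotvC dotvNl dotvC. Qed.

Lemma dotvBr u v w : dotv w (u - v) = dotv w u - dotv w v.
Proof. by rewrite dotvDr dotvNr. Qed.

Lemma dotv0l u : dotv 0 u = 0.
Proof. by rewrite /dotv big1 // => i _; rewrite mxE mul0r. Qed.

Lemma dotv0r u : dotv u 0 = 0.
Proof. by rewrite dotvC dotv0l. Qed.

Lemma dotv_ge0 u : 0 <= dotv u u.
Proof. by rewrite /dotv sumr_ge0 // => i _; rewrite -expr2 sqr_ge0. Qed.

Lemma dotv_eq0 u : dotv u u = 0 -> u = 0.
Proof.
move=> H; apply/rowP => i; rewrite mxE.
rewrite /dotv in H.
have ge : forall j : 'I_n, predT j -> 0 <= u 0 j * u 0 j by move=> j _; rewrite -expr2 sqr_ge0.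
have := @psumr_eq0P _ _ predT (fun j => u 0 j * u 0 j) ge H i isT.
by move/eqP; rewrite -expr2 sqrf_eq0 => /eqP.
Qed.

Lemma enorm_sq u : enorm u ^+ 2 = dotv u u.
Proof. by rewrite /enorm sqr_sqrtr // dotv_ge0. Qed.

Lemma enorm_ge0 u : 0 <= enorm u.
Proof. exact: sqrtr_ge0. Qed.

Lemma dd_expand u v (s : R) :
  dotv (u - s *: v) (u - s *: v) = dotv u u - 2 * s * dotv u v + s ^+ 2 * dotv v v.
Proof.
rewrite !dotvBl !dotvBr !dotvZl !dotvZr (dotvC v u). 
ring.
Qed.

Lemma dot_le u v : 2 * dotv u v <= dotv u u + dotv v v.
Proof.
have := dotv_ge0 (u - 1 *: v); rewrite dd_expand; lra.
Qed.

Lemma dot_le_s u v (s : R) : 0 < s -> 2 * dotv u v <= dotv u u / s + s * dotv v v.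
Proof.
move=> s0; have := dotv_ge0 (u - s *: v); rewrite dd_expand => H.
have E : dotv u u = dotv u u / s * s by rewrite divfK ?gt_eqF.
set a := dotv u u / s. rewrite E in H.
rewrite expr2 in H.
have H2 : 0 <= s * (a + s * dotv v v - 2 * dotv u v).
  have -> : s * (a + s * dotv v v - 2 * dotv u v) = a * s - 2 * s * dotv u v + s * s * dotv v v by ring.
  exact: H.
rewrite pmulr_rge0 // in H2; lra.
Qed.

Lemma dd_add_le u v : dotv (u + v) (u + v) <= 2 * dotv u u + 2 * dotv v v.
Proof.
have := dot_le u v.
rewrite !dotvDl !dotvDr (dotvC v u); lra.
Qed.

Lemma enormZ (a : R) u : 0 <= a -> enorm (a *: u) = a * enorm u.
Proof.
move=> a0; rewrite /enorm dotvZl dotvZr mulrA -expr2 sqrtrM ?sqr_ge0 //.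
by rewrite sqrtr_sqr ger0_norm.
Qed.

Lemma enormN u : enorm (- u) = enorm u.
Proof. by rewrite /enorm dotvNl dotvNr opprK. Qed.

Lemma enorm_gt0 u : u != 0 -> 0 < enorm u.
Proof.
move=> u0; rewrite /enorm sqrtr_gt0 lt_def dotv_ge0 andbT.
by apply/eqP => /dotv_eq0 /eqP; rewrite (negbTE u0).
Qed.

Lemma coord_le u i : u 0 i ^+ 2 <= dotv u u.
Proof.
by rewrite /dotv (bigD1 i) //= -expr2 lerDl sumr_ge0 // => j _; rewrite -expr2 sqr_ge0.
Qed.

Lemma coord_le_norm (u : V) i : `|u 0 i| <= `|u|.
Proof.
rewrite [leRHS]/Num.norm /= mx_normrE; apply/bigmax_geP; right => /=.
by exists (0, i).
Qed.

Lemma dd_le_norm u : dotv u u <= n%:R * `|u| ^+ 2.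
Proof.
have -> : (n%:R : R) = \sum_(i < n) (1 : R) by rewrite sumr_const card_ord.
rewrite /dotv mulr_suml.
apply: ler_sum => i _; rewrite mul1r -expr2 -real_normK ?num_real //.
by rewrite lerXn2r ?nnegrE ?normr_ge0 // coord_le_norm.
Qed.

Lemma norm_le_dd u (e : R) : 0 < e -> dotv u u < e ^+ 2 -> `|u| < e.
Proof.
move=> e0 H.
have [u0|u0] := eqVneq `|u| 0; first by rewrite u0.
have := mx_norm_neq0 u0.
move=> [[i j]] /= E.
have -> : `|u| = `|u i j| by exact: E.
have h1 : `|u i j| ^+ 2 < e ^+ 2.
  by rewrite real_normK ?num_real // (ord1 i); apply: le_lt_trans (coord_le _ _) H.
have h2 := normr_ge0 (u i j).
move: h1 h2; set a := `|u i j|; rewrite !expr2 => h1 h2; nra.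
Qed.

End Dot.


Section Calc.
Variables (R : realType) (n : nat) (f : 'rV[R]_n -> R).
Hypothesis fdiff : forall y, differentiable f y.
Local Notation V := 'rV[R]_n.

Lemma derive_dot (p v : V) : derive f p v = dotv (grad f p) v.
Proof.
rewrite deriveE // {1}(row_sum_delta v) linear_sum /dotv; apply: eq_bigr => i _.
rewrite linearZ /= -deriveE // /grad mxE mulrC.
done.
Qed.

Lemma phi_derive (a d : V) (t : R) :
  is_derive t 1 (fun s : R => f (a + s *: d)) (dotv (grad f (a + t *: d)) d).
Proof.
have E : (fun h : R => h^-1 *: (((fun s : R => f (a + s *: d)) \o shift t) (h *: 1) - f (a + t *: d)))
   = (fun h : R => h^-1 *: ((f \o shift (a + t *: d)) (h *: d) - f (a + t *: d))).
  apply/funext => h /=; congr (_ *: (f _ - _)).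
  rewrite scalerDl.
  have -> : h%:A = h :> R by rewrite -[h%:A]/(h * 1) mulr1.
  by rewrite addrCA.
have D : derivable (fun s : R => f (a + s *: d)) t 1.
  by rewrite /derivable E; exact: diff_derivable.
apply: DeriveDef => //.
by rewrite /derive E -/(derive f _ d) derive_dot.
Qed.


Lemma grad_ineq (fconv : convex_fun f) (a d : V) :
  f a + dotv (grad f a) d <= f (a + d).
Proof.
have H := phi_derive a d 0.
case: H => D E.
rewrite scale0r addr0 in E.
set C := f (a + d) - f a.
suff : 'D_1 (fun s : R => f (a + s *: d)) 0 <= C by rewrite E /C; lra.
have D' : (fun h : R => h^-1 *: (((fun s : R => f (a + s *: d)) \o shift 0) (h *: 1) - f (a + 0 *: d)))
     @ 0^'+ --> 'D_1 (fun s : R => f (a + s *: d)) 0.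
  apply: cvg_trans D; apply: cvg_app; apply: within_subset => y /= y0.
  by rewrite gt_eqF.
apply: (closed_cvg [set y | y <= C] (@closed_le R C) _ _ D').
near=> h.
have h0 : 0 < h by near: h; exact: nbhs_right_gt.
have h1 : h < 1 by near: h; exact: nbhs_right_lt.
rewrite /= scale0r addr0.
have -> : h%:A = h :> R by rewrite -[h%:A]/(h * 1) mulr1.
rewrite ?add0r ?addr0.
have cv := fconv (a + d) a h.
have : 0 <= h <= 1 by rewrite !ltW.
move=> /cv.
have -> : h *: (a + d) + (1 - h) *: a = a + h *: d.
  by rewrite scalerDr scalerBl scale1r addrAC [h *: a + _]addrC subrK.
move=> Hc.
rewrite -[_ *: _]/(h^-1 * _) /C.
rewrite ler_pdivrMl //. lra.
Unshelve. all: by end_near.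
Qed.

Variable L : R.
Hypothesis L0 : 0 < L.
Hypothesis Lip : lipschitz_with L (grad f).

Lemma lip_sq (u v : V) :
  dotv (grad f u - grad f v) (grad f u - grad f v) <= L ^+ 2 * dotv (u - v) (u - v).
Proof.
have H := Lip u v.
rewrite -!enorm_sq.
have h1 := enorm_ge0 (grad f u - grad f v).
have h2 := enorm_ge0 (u - v).
move: H h1 h2; set p := enorm _; set q := enorm _ => H h1 h2.
rewrite !expr2; nra.
Qed.

Lemma descent (a d : V) :
  f (a + d) <= f a + dotv (grad f a) d + L / 2 * dotv d d.
Proof.
set c1 := dotv (grad f a) d; set c2 := L / 2 * dotv d d.
pose g : R -> R := (c1 \*: id) + (c2 \*: (id * id)).
pose psi : R -> R := (fun s : R => f (a + s *: d)) - g.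
pose df : R -> R := fun s => dotv (grad f (a + s *: d)) d - (c1 *: 1 + c2 *: (s *: 1 + s *: 1)).
have Dpsi : forall s : R, is_derive s 1 psi (df s).
  move=> s; rewrite /psi /df.
  apply: is_deriveB; first exact: phi_derive.
have cont : {within `[0, 1], continuous psi}.
  apply: continuous_subspaceT => s.
  apply: differentiable_continuous; apply/derivable1_diffP.
  by case: (Dpsi s).
have [c c01 Hc] := MVT ltr01 (fun s _ => Dpsi s) cont.
have c0 : 0 < c by move: c01; rewrite in_itv => /andP[].
have dfc : df c <= 0.
  rewrite /df.
  have -> : c1 *: (1:R) + c2 *: (c *: (1:R) + c *: 1) = c1 + 2 * c * c2.
    rewrite -[c1 *: 1]/(c1 * 1) -[c *: (1:R)]/(c * 1) -[c2 *: _]/(c2 * _); ring.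
  set w := grad f (a + c *: d) - grad f a.
  have E : dotv (grad f (a + c *: d)) d = dotv w d + c1 by rewrite /w dotvBl /c1; ring.
  rewrite E.
  have Lc : 0 < L * c by rewrite mulr_gt0.
  have H1 := dot_le_s w d Lc.
  have H2 : dotv w w <= L ^+ 2 * (c ^+ 2 * dotv d d).
    have := lip_sq (a + c *: d) a.
    by rewrite addrAC subrr add0r dotvZl dotvZr (mulrA c c) -expr2.
  have H3 : dotv w w / (L * c) <= L * c * dotv d d.
    rewrite ler_pdivrMr //.
    by have -> : L * c * dotv d d * (L * c) = L ^+ 2 * (c ^+ 2 * dotv d d) by ring.
  rewrite /c2; lra.
have : psi 1 - psi 0 <= 0.
  by rewrite Hc subr0 mulr1.
move=> H.
have : f (a + 1 *: d) - (c1 * 1 + c2 * (1 * 1)) - (f (a + 0 *: d) - (c1 * 0 + c2 * (0 * 0))) <= 0 by exact: H.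
rewrite scale1r scale0r addr0 !mulr1 !mulr0; lra.
Qed.

Hypothesis fconv : convex_fun f.

Lemma addrSub (u v : V) : u + (v - u) = v.
Proof. by rewrite addrC subrK. Qed.

Lemma grad_mono (a b : V) : 0 <= dotv (grad f a - grad f b) (a - b).
Proof.
have H1 := grad_ineq fconv a (b - a).
have H2 := grad_ineq fconv b (a - b).
rewrite !addrSub in H1 H2.
rewrite dotvBl.
have E : dotv (grad f a) (b - a) = - dotv (grad f a) (a - b).
  by rewrite -dotvNr opprB.
rewrite E in H1; lra.
Qed.

Lemma coco (xs x : V) : grad f xs = 0 ->
  dotv (grad f x) (grad f x) / L <= dotv (x - xs) (grad f x).
Proof.
move=> gxs.
set g := grad f x; set G := dotv g g; set m := L^-1.
have Lm : L * m = 1 by rewrite /m divff // gt_eqF.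
have m0 : 0 < m by rewrite invr_gt0.
have D1 := descent x (- (m *: g)).
have G1 := grad_ineq fconv xs (x - m *: g - xs).
rewrite addrSub gxs dotv0l addr0 in G1.
have D2 := descent xs (m *: g).
rewrite gxs dotv0l addr0 in D2.
have G2 := grad_ineq fconv x (xs + m *: g - x).
rewrite addrSub in G2.
rewrite dotvNr dotvNl dotvNr opprK !dotvZl !dotvZr -/G in D1.
rewrite !dotvZl !dotvZr -/G in D2.
rewrite !dotvBr !dotvDr dotvZr -/G in G2.
have E1 : L / 2 * (m * (m * G)) = m * G / 2.
  have -> : L / 2 * (m * (m * G)) = (L * m) * (m * G) / 2 by rewrite mulrA; ring.
  by rewrite Lm mul1r.
rewrite E1 in D1 D2.
rewrite dotvBl (dotvC x g) (dotvC xs g).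
have -> : G / L = m * G by rewrite mulrC.
rewrite -/(x - m *: g) in D1.
lra.
Qed.

End Calc.


Section Step.
Variables (R : realType) (n : nat) (f : 'rV[R]_n -> R).
Local Notation V := 'rV[R]_n.

Lemma ratio_eq (x : V) (gam : R) : 0 < gam ->
  Defs.ratio f x gam = enorm (grad f (x - gam *: grad f x) - grad f x) / enorm (grad f x).
Proof.
move=> g0; rewrite /Defs.ratio /=.
have -> : x - gam *: grad f x - x = - (gam *: grad f x) by rewrite addrAC subrr add0r.
rewrite enormN enormZ ?ltW // -mulf_div divff ?mul1r // gt_eqF //.
Qed.

Hypothesis fdiff : forall y, differentiable f y.
Variables (L beta nu hup eta hmin : R).
Hypothesis L0 : 0 < L.
Hypothesis Lip : lipschitz_with L (grad f).
Hypothesis fconv : convex_fun f.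
Hypotheses (b0 : 0 <= beta) (b1 : beta <= 1) (nu0 : 0 < nu) (nu1 : nu < 1).
Hypotheses (hup4 : hup < 4 / L) (eta0 : 0 < eta) (eta2 : eta < 2) (hmin0 : 0 < hmin).

Definition c0 := 1 - L * hup / 4.
Definition c1 := Num.min c0 ((1 - nu ^+ 2) / 2).
Definition cst := eta * (2 - eta) * c1 ^+ 2 * hmin ^+ 2 / 4.

Lemma c0_gt0 : 0 < c0.
Proof.
have h4 := hup4.
rewrite -(ltr_pM2l L0) mulrCA divff ?gt_eqF // mulr1 in h4.
rewrite /c0 subr_gt0.
have q : 0 < (4:R)^-1 by rewrite invr_gt0.
have q4 : (4:R) * 4^-1 = 1 by rewrite divff.
nra.
Qed.

Lemma c1_gt0 : 0 < c1.
Proof.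
rewrite /c1 lt_min c0_gt0 /= divr_gt0 // subr_gt0 expr2.
have a := nu0; have b := nu1. nra.
Qed.

Lemma cst_gt0 : 0 < cst.
Proof.
have c := c1_gt0.
rewrite /cst divr_gt0 // !mulr_gt0 // ?subr_gt0 // exprn_gt0 //.
Qed.


Lemma step_key (xk xs xn : V) (hk : R) :
  grad f xs = 0 -> grad f xk != 0 -> 0 < hk -> hk <= hup -> hmin <= hk ->
  Defs.ratio f xk hk <= nu ->
  xn = xk - (eta * alpha f L beta xk hk * hk) *:
                   (grad f xk - beta *: (grad f xk - grad f (xk - hk *: grad f xk))) ->
  dotv (xn - xs) (xn - xs) <= dotv (xk - xs) (xk - xs) - cst * dotv (grad f xk) (grad f xk).
Proof.
move=> gxs gne hk0 hkup hkmin rat xnE.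
have L0' := L0; have b0' := b0; have b1' := b1; have nu0' := nu0; have nu1' := nu1.
have eta0' := eta0; have eta2' := eta2; have hmin0' := hmin0.
have c0p := c0_gt0; have c1p := c1_gt0.
have c1c0 : c1 <= c0 by rewrite /c1 ge_min lexx.
have c1nu : c1 <= (1 - nu ^+ 2) / 2 by rewrite /c1 ge_min lexx orbT.
set g := grad f xk; set z := xk - hk *: g; set gz := grad f z.
set e := gz - g; set d := g - beta *: (g - gz).
have dE : d = g + beta *: e by rewrite /d /e -scalerN opprB.
set G := dotv g g; set Ee := dotv e e; set Dd := dotv d d.
have G0 : 0 < G.
  by have := enorm_gt0 gne; rewrite /enorm sqrtr_gt0.
have Ee0 : 0 <= Ee by exact: dotv_ge0.
have Dd0 : 0 <= Dd by exact: dotv_ge0.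
have nE : 0 < enorm g by exact: enorm_gt0.
rewrite ratio_eq // -/g -/z -/gz -/e ler_pdivrMr // in rat.
have Ee_le : Ee <= nu ^+ 2 * G.
  rewrite /Ee /G -!enorm_sq.
  have := enorm_ge0 e; move: rat nE; set p := enorm e; set q := enorm g => ? ? ?.
  rewrite !expr2; nra.
set P := dotv g gz.
have PE : P = G + dotv g e.
  by rewrite /P -[gz](subrK g) -/e dotvDr addrC.
have ge_low : - (G + Ee) <= 2 * dotv g e.
  by have := dot_le g (- e); rewrite dotvNr dotvNl dotvNr opprK -/G -/Ee; lra.
have gd : dotv g d = G + beta * dotv g e by rewrite dE dotvDr dotvZr.
have gd_pos : 0 < dotv g d.
  have X : 0 <= beta * (2 * dotv g e + G + Ee) by apply: mulr_ge0; lra.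
  have Y : 0 <= (1 - beta) * (G + Ee) by apply: mulr_ge0; lra.
  rewrite gd; nra.
have Dd_pos : 0 < Dd.
  rewrite lt_def Dd0 andbT; apply/eqP => /dotv_eq0 d0.
  by move: gd_pos; rewrite d0 dotv0r ltxx.
have Dd_le : Dd <= 4 * G.
  have := dd_add_le g (beta *: e); rewrite -dE -/Dd -/G dotvZl dotvZr -/Ee.
  have X : beta * (beta * Ee) <= Ee.
    have : 0 <= (1 - beta * beta) * Ee by apply: mulr_ge0 => //; nra.
    nra.
  nra.
set M := (1 - beta) * (1 - L * hk / 4) * G + beta * P.
have hkc0 : c0 <= 1 - L * hk / 4.
  have : L * hk <= L * hup by rewrite ler_pM2l.
  rewrite /c0; lra.
have M_ge : c1 * G <= M.
  have X : 0 <= (1 - beta) * ((1 - L * hk / 4 - c1) * G) by apply: mulr_ge0; [lra|apply: mulr_ge0; lra].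
  have Y : 0 <= beta * (P - c1 * G).
    apply: mulr_ge0 => //.
    have : (1 - nu ^+ 2) / 2 * G <= P.
      rewrite PE; have : Ee <= nu ^+ 2 * G := Ee_le. lra.
    have : c1 * G <= (1 - nu ^+ 2) / 2 * G by rewrite ler_pM2r.
    lra.
  rewrite /M; nra.
have aE : alpha f L beta xk hk = M / Dd.
  have xz : xk - z = hk *: g by rewrite /z opprB addrSub.
  rewrite /alpha /= -/g -/z -/gz xz !enorm_sq -/d -/Dd dotvZl !dotvZr dotvZl -/G -/P /M.
  field.
  by rewrite !gt_eqF.
set u := xk - xs.
have uA : hk * M <= dotv u d.
  have ud : dotv u d = (1 - beta) * dotv u g + beta * dotv u gz.
    by rewrite /d dotvBr dotvZr dotvBr; ring.
  have co := coco fdiff L0 Lip fconv xk gxs; rewrite -/g -/G -/u in co.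
  have mo := grad_mono fdiff fconv z xs; rewrite gxs subr0 -/gz in mo.
  have ugz : dotv u gz = hk * P + dotv gz (z - xs).
    have -> : u = hk *: g + (z - xs) by rewrite /u /z addrA addrSub.
    by rewrite dotvDl dotvZl (dotvC (z - xs)).
  have Q : hk * (1 - L * hk / 4) <= L^-1.
    have -> : L^-1 = hk * (1 - L * hk / 4) + L^-1 * (1 - L * hk / 2) ^+ 2.
      by field; rewrite gt_eqF.
    by rewrite lerDl; apply: mulr_ge0; [rewrite invr_ge0 ltW|exact: sqr_ge0].
  have Q' : hk * (1 - L * hk / 4) * G <= dotv u g.
    apply: le_trans co; apply: le_trans (ler_wpM2r (ltW G0) Q) _; by rewrite mulrC.
  have X : 0 <= (1 - beta) * (dotv u g - hk * (1 - L * hk / 4) * G) by apply: mulr_ge0; lra.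
  have Y : 0 <= beta * dotv gz (z - xs) by apply: mulr_ge0.
  have E : (1 - beta) * dotv u g + beta * (hk * P + dotv gz (z - xs)) - hk * M =
    (1 - beta) * (dotv u g - hk * (1 - L * hk / 4) * G) + beta * dotv gz (z - xs) by rewrite /M; ring.
  rewrite ud ugz; lra.
have -> : xn - xs = u - (eta * alpha f L beta xk hk * hk) *: d by rewrite xnE /u addrAC.
rewrite dd_expand aE -/u -/Dd.
set a := M / Dd.
have M0 : 0 <= M by apply: le_trans M_ge; apply: mulr_ge0; apply: ltW.
have a0 : 0 <= a by rewrite /a divr_ge0.
have aD : a * Dd = M by rewrite /a divfK // gt_eqF.
have aM : c1 ^+ 2 * G / 4 <= a * M.
  have -> : a * M = M * M / Dd by rewrite /a mulrAC.
  rewrite ler_pdivlMr //.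
  have T1 : c1 ^+ 2 * G * Dd <= c1 ^+ 2 * G * (4 * G).
    by rewrite ler_pM2l // mulr_gt0 // exprn_gt0.
  have T2 : (c1 * G) * (c1 * G) <= M * M.
    by apply: ler_pM => //; apply: mulr_ge0; apply: ltW.
  have E1 : c1 ^+ 2 * G * (4 * G) / 4 = (c1 * G) * (c1 * G) by rewrite expr2; field.
  have T3 : c1 ^+ 2 * G * Dd / 4 <= c1 ^+ 2 * G * (4 * G) / 4.
    by rewrite ler_pM2r // invr_gt0.
  have E2 : c1 ^+ 2 * G / 4 * Dd = c1 ^+ 2 * G * Dd / 4 by ring.
  rewrite E2; apply: (le_trans T3); rewrite E1; exact: T2.
have hk2 : hmin ^+ 2 <= hk ^+ 2.
  by rewrite lerXn2r // ?nnegrE ltW // (lt_le_trans hmin0).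
set A := dotv u d.
set s := eta * a * hk.
have s0 : 0 <= s by apply: mulr_ge0; [apply: mulr_ge0; [exact: ltW|exact: a0]|exact: ltW].
have T1 : s * (hk * M) <= s * A := @ler_wpM2l R s s0 (hk * M) A uA.
have T3 : s * (hk * M) = eta * (hk ^+ 2 * (a * M)) by rewrite /s; ring.
have T2 : s ^+ 2 * Dd = eta ^+ 2 * (hk ^+ 2 * (a * M)).
  have -> : s ^+ 2 * Dd = eta ^+ 2 * (hk ^+ 2 * a * (a * Dd)) by rewrite /s; ring.
  by rewrite aD; ring.
have T4 : hmin ^+ 2 * (c1 ^+ 2 * G / 4) <= hk ^+ 2 * (a * M).
  apply: ler_pM => //; first exact: sqr_ge0.
  by apply: divr_ge0 => //; apply: mulr_ge0; [exact: sqr_ge0|exact: ltW].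
have T5 : cst * G = eta * (2 - eta) * (hmin ^+ 2 * (c1 ^+ 2 * G / 4)) by rewrite /cst; ring.
move: T1 T2 T3 T4 T5.
set X := hk ^+ 2 * (a * M); set Y := hmin ^+ 2 * (c1 ^+ 2 * G / 4) => T1 T2 T3 T4 T5.
have T6 : 0 <= eta * (2 - eta) * (X - Y) by apply: mulr_ge0; [apply: mulr_ge0; lra|lra].
have E : eta * (2 - eta) * (X - Y) = 2 * (eta * X) - eta ^+ 2 * X - eta * (2 - eta) * Y by ring.
rewrite T5 T2; rewrite T3 in T1.
lra.
Qed.

End Step.


Section Bt.
Variables (R : realType) (n : nat) (f : 'rV[R]_n -> R).
Local Notation V := 'rV[R]_n.
Variables (L theta nu hlo : R).
Hypothesis L0 : 0 < L.
Hypothesis Lip : lipschitz_with L (grad f).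
Hypotheses (th0 : 0 < theta) (th1 : theta < 1) (nu0 : 0 < nu) (nu1 : nu < 1) (hlo0 : 0 < hlo).

Lemma ratio_le (x : V) (gam : R) : grad f x != 0 -> 0 < gam ->
  Defs.ratio f x gam <= L * gam.
Proof.
move=> gne g0; rewrite ratio_eq //.
have nE := enorm_gt0 gne.
rewrite ler_pdivrMr //.
have := Lip (x - gam *: grad f x) x.
by rewrite addrAC subrr add0r enormN (enormZ _ (ltW g0)) mulrA.
Qed.

Lemma bt_pos (x : V) (g0k : R) (l : nat) : hlo <= g0k ->
  (forall l', (l' < l)%N -> nu < Defs.ratio f x (backtrack f x theta g0k l')) ->
  forall j, (j <= l)%N -> 0 < backtrack f x theta g0k j <= g0k.
Proof.
move=> hg0 Hl; elim=> [|j IH] jl /=.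
  by rewrite lexx andbT (lt_le_trans hlo0).
have /andP[p q] := IH (ltnW jl).
have r := Hl j jl.
set b := backtrack f x theta g0k j in p q r *.
set rr := Defs.ratio f x b in r *.
have rr0 : 0 < rr by apply: lt_trans r.
have m0 : 0 < Num.min 1 (1 / rr) by rewrite lt_min ltr01 divr_gt0.
have m1 : Num.min 1 (1 / rr) <= 1 by rewrite ge_min lexx.
apply/andP; split; first by rewrite !mulr_gt0.
apply: le_trans _ q.
have H : theta * Num.min 1 (1 / rr) <= 1.
  apply: le_trans (ler_wpM2l (ltW th0) m1) _; rewrite mulr1; exact: ltW.
rewrite -mulrA ler_piMr //; first exact: ltW.
Qed.

Definition hmin := Num.min hlo (theta * nu / L).

Lemma bt_low (x : V) (g0k : R) (l : nat) : grad f x != 0 -> hlo <= g0k ->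
  (forall l', (l' < l)%N -> nu < Defs.ratio f x (backtrack f x theta g0k l')) ->
  hmin <= backtrack f x theta g0k l.
Proof.
move=> gne hg0 Hl.
case: l Hl => [|j] Hl /=; first by rewrite /hmin ge_min hg0.
have /andP[p q] := bt_pos hg0 Hl (leqnSn j).
have r := Hl j (ltnSn j).
set b := backtrack f x theta g0k j in p q r *.
have rl := ratio_le gne p.
set rr := Defs.ratio f x b in r rl *.
have rr0 : 0 < rr by apply: lt_trans r.
rewrite /hmin ge_min; apply/orP; right.
have L0' := L0; have th0' := th0; have nu1' := nu1; have nu0' := nu0.
case: (leP 1 (1 / rr)) => H.
  have hb : nu / L <= b.
    by rewrite ler_pdivrMr // mulrC; apply: ltW; exact: lt_le_trans r rl.
  have := ler_wpM2l (ltW th0) hb.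
  lra.
have h1 : rr / L <= b by rewrite ler_pdivrMr // mulrC.
have h1' : 1 / L <= b / rr.
  rewrite ler_pdivlMr //.
  have -> : 1 / L * rr = rr / L by ring.
  exact: h1.
have h2 : nu / L <= 1 / L by rewrite ler_pM2r ?invr_gt0 // ltW.
have := ler_wpM2l (ltW th0) (le_trans h2 h1').
lra.
Qed.

End Bt.

Unset Implicit Arguments.


Lemma proj_bounds (R : realType) (a b t : R) : a <= b -> a <= proj_int a b t <= b.
Proof.
move=> ab; rewrite /proj_int le_min ab le_max lexx /= ge_min lexx //.
Qed.

Lemma dd_swap (R : realType) (n : nat) (u v : 'rV[R]_n) :
  dotv (u - v) (u - v) = dotv (v - u) (v - u).
Proof. by rewrite -opprB dotvNl dotvNr opprK. Qed.

Theorem theorem5 (R : realType) (n : nat) (f : 'rV[R]_n -> R) (L : R)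
    (mu nu hlo hup g00 beta theta tau eta : R) (x0 : 'rV[R]_n)
    (x : nat -> 'rV[R]_n) (h g0 : nat -> R) :
  convex_fun f ->
  (forall y : 'rV[R]_n, differentiable f y) ->
  0 < L -> lipschitz_with L (grad f) ->
  (exists xs : 'rV[R]_n, grad f xs = 0) ->
  0 < mu -> mu < nu -> nu < 1 ->
  0 < hlo -> hlo < 1 -> 1 <= g00 -> g00 <= hup -> hup < 4 / L ->
  0 <= beta -> beta <= 1 ->
  0 < theta -> theta < 1 -> 1 < tau -> 0 < eta -> eta < 2 ->
  algorithm3 f L mu nu hlo hup beta theta tau eta x0 g00 x h g0 ->
  (forall k : nat, grad f (x k) != 0) ->
  exists2 xs : 'rV[R]_n, grad f xs = 0 & x @ \oo --> xs.
Proof.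
move=> fconv fdiff L0 Lip [xs0 gxs0] mu0 munu nu1 hlo0 hlo1 g001 g00up hup4 b0 b1
  th0 th1 tau1 eta0 eta2 [x0E g00E Hk] gne.
have nu0 : 0 < nu by apply: lt_trans munu.
set hm := hmin L theta nu hlo.
have hm0 : 0 < hm.
  by rewrite /hm /hmin lt_min hlo0 /= divr_gt0 // mulr_gt0.
have hlohup : hlo <= hup by apply: le_trans g00up; apply: ltW; apply: lt_le_trans g001.
have g0b : forall k, hlo <= g0 k <= hup.
  elim=> [|k IH].
    by rewrite g00E g00up andbT; apply: ltW; apply: lt_le_trans g001.
  have [_ _ ->] := Hk k.
  by case: ifP => _; apply: proj_bounds.
have Hs : forall k, [/\ 0 < h k, h k <= hup, hm <= h k &
                       Defs.ratio f (x k) (h k) <= nu].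
  move=> k; have [[l [hE [rat prev]]] _ _] := Hk k.
  have /andP[gl gu] := g0b k.
  have /andP[p q] := bt_pos th0 th1 nu0 hlo0 gl prev (leqnn l).
  have lo := bt_low L0 Lip th0 th1 nu0 nu1 hlo0 (gne k) gl prev.
  rewrite -hE in p q lo; split => //; exact: le_trans q gu.
set c := cst L nu hup eta hm.
have c0 : 0 < c := cst_gt0 L0 nu0 nu1 hup4 eta0 eta2 hm0.
have dec : forall xs k, grad f xs = 0 ->
    dotv (x k.+1 - xs) (x k.+1 - xs) <=
    dotv (x k - xs) (x k - xs) - c * dotv (grad f (x k)) (grad f (x k)).
  move=> xs k gxs; have [p q r s] := Hs k; have [_ xE _] := Hk k.
  exact: (step_key fdiff L0 Lip fconv b0 b1 nu0 nu1 hup4 eta0 eta2 hm0 gxs (gne k) p q r s xE).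
pose G := fun k => dotv (grad f (x k)) (grad f (x k)).
have G0 : forall k, 0 <= G k by move=> k; exact: dotv_ge0.
have mono : forall xs k m, grad f xs = 0 ->
    dotv (x (k + m)%N - xs) (x (k + m)%N - xs) <= dotv (x k - xs) (x k - xs).
  move=> xs k m gxs; elim: m => [|m IH]; first by rewrite addn0.
  rewrite addnS; apply: le_trans IH; apply: le_trans (dec _ _ gxs) _.
  by rewrite gerBl; apply: mulr_ge0; [exact: ltW|exact: dotv_ge0].
set D := dotv (x 0%N - xs0) (x 0%N - xs0).
have sumb : forall K, c * \sum_(0 <= k < K) G k <= D.
  have aux : forall K, dotv (x K - xs0) (x K - xs0) + c * \sum_(0 <= k < K) G k <= D.
    elim => [|K IH]; first by rewrite big_geq // mulr0 addr0.
    rewrite big_nat_recr //= mulrDr.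
    have := dec xs0 K gxs0; rewrite -/(G K); lra.
  move=> K; have := aux K; have := dotv_ge0 (x K - xs0); lra.
have Gcv : G @ \oo --> 0.
  apply: cvg_series_cvg_0; apply: nondecreasing_is_cvgn.
    by apply: nondecreasing_series => k _ _; exact: G0.
  exists (D / c) => _ [K _ <-]; rewrite /series /= ler_pdivlMr //.
  by rewrite mulrC; exact: sumb.
have Gsmall : forall e, 0 < e -> \forall k \near \oo, G k < e.
  move=> e e0; move/cvgrPdist_lt: Gcv => /(_ e e0); apply: filterS => k.
  by rewrite sub0r normrN ger0_norm.
set r := Num.sqrt D.
set B := [set v : 'rV[R]_n | forall i, `[xs0 ord0 i - r, xs0 ord0 i + r]%classic (v ord0 i)].
have Bc : compact B.
  by apply: (@rV_compact _ _ (fun i => `[xs0 ord0 i - r, xs0 ord0 i + r]%classic)) => i; exact: segment_compact.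
have xB : forall k, B (x k).
  move=> k i; have h1 := mono xs0 0%N k gxs0; rewrite add0n -/D in h1.
  have h2 := coord_le (x k - xs0) i.
  rewrite /= in_itv /= -ler_distl.
  rewrite !mxE in h2.
  rewrite -sqrtr_sqr /r; apply: ler_wsqrtr; exact: le_trans h2 h1.
have [p [Bp clp]] : B `&` cluster (x @ \oo) !=set0.
  apply: Bc; exists 0%N => // k _; exact: xB.
have clu : forall e, 0 < e -> exists k, G k < e /\ dotv (p - x k) (p - x k) < e.
  move=> e e0.
  set N := (n%:R : R).
  have N0 : 0 <= N by rewrite /N ler0n.
  set dl := Num.min 1 (e / (N + 1)).
  have N1 : 0 < N + 1 by rewrite ltr_wpDl.
  have dl0 : 0 < dl by rewrite /dl lt_min ltr01 divr_gt0.
  have dl1 : dl <= 1 by rewrite /dl ge_min lexx.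
  have dle : dl * (N + 1) <= e by rewrite -ler_pdivlMr // /dl ge_min lexx orbT.
  have FA : (x @ \oo) (x @` [set k | G k < e]).
    by apply: filterS (Gsmall e e0) => k Gk; exists k.
  have := clp _ _ FA (nbhsx_ballx p dl dl0).
    case => _ [[k Gk <-] bk].
    exists k; split => //.
    rewrite -ball_normE /= in bk.
    have t0 := normr_ge0 (p - x k).
    move: bk t0; set t := `|p - x k| => bk t0.
    have H1 := dd_le_norm (p - x k); rewrite -/N -/t in H1.
    have H2 : t * t <= dl * dl by apply: ler_pM => //; apply: ltW.
    have H3 : dl * dl <= dl by rewrite ler_piMl // ltW.
    have H4 : N * (t * t) <= N * dl by apply: ler_wpM2l => //; exact: le_trans H2 H3.
    rewrite expr2 in H1; lra.
have gp : grad f p = 0.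
  apply: dotv_eq0; apply/eqP; rewrite eq_le dotv_ge0 andbT.
  apply/ler_addgt0Pr => e e0; rewrite add0r.
  set K := 2 * L ^+ 2 + 2.
  have K0 : 0 < K by rewrite /K ltr_wpDl // mulr_ge0 // sqr_ge0.
  set w := e / K.
  have w0 : 0 < w by rewrite /w divr_gt0.
  have [k [Gk dk]] := clu w w0.
  have H1 := dd_add_le (grad f p - grad f (x k)) (grad f (x k)).
  rewrite subrK in H1.
  have H2 := lip_sq Lip p (x k).
  have H3 : L ^+ 2 * dotv (p - x k) (p - x k) <= L ^+ 2 * w.
    by apply: ler_wpM2l; [exact: sqr_ge0|exact: ltW].
  have Kw : 2 * (L ^+ 2 * w) + 2 * w = e by rewrite /w /K; field; rewrite gt_eqF.
  rewrite -/(G k) in H1.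
  lra.
exists p => //.
apply/cvgrPdist_lt => e e0.
have [k0 [_ dk0]] := clu (e ^+ 2) (exprn_gt0 2 e0).
exists k0 => // k /= kk0.
have := mono p k0 (k - k0)%N gp; rewrite subnKC // => H.
apply: norm_le_dd => //.
rewrite dd_swap in dk0; rewrite dd_swap.
exact: le_lt_trans H dk0.
Qed.
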